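(* Let $\epsilon\ge0$ and let $\mu,\nu$ be finite positive measures on $\mathbb{R}$, absolutely continuous with respect to Lebesgue measure, with $\mu(\mathbb{R})=\nu(\mathbb{R})=U$. Let $F(x)=\mu((-\infty,x])$, $G(x)=\nu((-\infty,x])$, and $F^{-1}(t)=\inf\{x\in\mathbb{R}:F(x)\ge t\}$, $G^{-1}(t)=\inf\{x:G(x)\ge t\}$ for $t\in(0,U)$. Then $D_\epsilon(\mu,\nu)=0$ if and only if $\sup_{t\in(0,U)}|F^{-1}(t)-G^{-1}(t)|\le 2\epsilon$.
   Context: $D_\epsilon(\mu,\nu)=\inf_\pi\pi\big(\{(x,x'):|x-x'|>2\epsilon\}\big)$, the infimum over measures $\pi$ on $\mathbb{R}\times\mathbb{R}$ with marginals $\mu$ and $\nu$. *)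

(* Defs.v *)
From HB Require Import structures.
From mathcomp Require Import all_boot all_order all_algebra.
From mathcomp Require Import all_classical all_reals all_analysis.
Set Implicit Arguments. Unset Strict Implicit. Unset Printing Implicit Defensive.
Import Order.TTheory GRing.Theory Num.Theory.
Local Open Scope classical_set_scope.
Local Open Scope ring_scope.

Definition coupling (R : realType)
  (mu nu : set R -> \bar R) (pi : {measure set (R * R)%type -> \bar R}) : Prop :=
  (forall A : set R, measurable A -> pi (A `*` setT) = mu A) /\
  (forall A : set R, measurable A -> pi (setT `*` A) = nu A).

Definition D_eps (R : realType) (eps : R) (mu nu : set R -> \bar R) : \bar R :=
  ereal_inf [set pi [set p : R * R | 2 * eps < `|p.1 - p.2|]
            | pi in [set pi : {measure set (R * R)%type -> \bar R} | coupling mu nu pi]].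

Definition cdf (R : realType) (mu : set R -> \bar R) (x : R) : R :=
  fine (mu [set` `]-oo, x]]).

Definition cdf_inv (R : realType) (mu : set R -> \bar R) (t : R) : R :=
  inf [set x : R | t <= cdf mu x].

(* Main.v *)
Require Import Defs.
From HB Require Import structures.
From mathcomp Require Import all_boot all_order all_algebra.
From mathcomp Require Import all_classical all_reals all_analysis.
From mathcomp Require Import ring lra measurable_realfun.
Import Order.TTheory GRing.Theory Num.Theory.
Local Open Scope classical_set_scope.
Local Open Scope ring_scope.
Section cdf_props.
Context (R : realType) (mu : {finite_measure set R -> \bar R}) (U : R).
Hypothesis hU : mu setT = U%:E.

Lemma cdfE x : mu `]-oo, x]%classic = (Defs.cdf mu x)%:E.
Proof. by rewrite /Defs.cdf fineK// fin_num_measure//; exact: measurable_itv. Qed.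

Lemma cdf_ge0 x : 0 <= Defs.cdf mu x.
Proof. by rewrite -lee_fin -cdfE measure_ge0. Qed.

Lemma cdf_leU x : Defs.cdf mu x <= U.
Proof. by rewrite -lee_fin -cdfE -hU le_measure// ?inE//; exact: measurable_itv. Qed.

Lemma cdf_nd x y : x <= y -> Defs.cdf mu x <= Defs.cdf mu y.
Proof.
move=> xy; rewrite -lee_fin -!cdfE le_measure// ?inE; try exact: measurable_itv.
by apply: subitvPr; rewrite bnd_simp.
Qed.

Lemma cdf_rc x t : (forall n : nat, t <= Defs.cdf mu (x + n.+1%:R^-1)) -> t <= Defs.cdf mu x.
Proof.
move=> h; rewrite -lee_fin -cdfE.
have := @nonincreasing_cvg_mu _ _ _ mu (fun n : nat => `]-oo, x + n.+1%:R^-1]%classic).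
have -> : \bigcap_n `]-oo, x + n.+1%:R^-1]%classic = `]-oo, x]%classic.
  apply/seteqP; split => y /=.
    move=> hy; rewrite in_itv /=; rewrite leNgt; apply/negP => xy.
    have [k hk] := ltr_add_invr xy.
    by have := hy k Logic.I; rewrite /= in_itv /= leNgt hk.
  rewrite in_itv /= => yx n _; rewrite /= in_itv /= (le_trans yx)// lerDl invr_ge0//.
move=> cv; apply: (cvge_to_ge (cv _ _ _ _)).
- by rewrite -ge0_fin_numE// fin_num_measure//; exact: measurable_itv.
- by move=> n; exact: measurable_itv.
- exact: measurable_itv.
- move=> n m nm; apply/subsetPset => y /=; rewrite !in_itv /= => /le_trans; apply.
  by rewrite lerD2l lef_pV2 ?posrE// ler_nat.
- by apply: nearW => n; rewrite /= cdfE lee_fin.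
Qed.

Lemma cdf_big t : t < U -> exists x, t <= Defs.cdf mu x.
Proof.
move=> tU; apply: contrapT => /forallNP h.
have := @nondecreasing_cvg_mu _ _ _ mu (fun n : nat => `]-oo, n%:R]%classic).
have -> : \bigcup_n `]-oo, n%:R]%classic = [set: R].
  apply/seteqP; split => y //= _.
  exists (Num.Def.archi_bound `|y|)%N => //=; rewrite in_itv /=.
  by rewrite ltW// (le_lt_trans (ler_norm y))// archi_boundP.
move=> cv.
have : (U%:E <= t%:E)%E.
  rewrite -hU.
  apply: (cvge_to_le (cv _ _ _)).
  - by move=> n; exact: measurable_itv.
  - exact: measurableT.
  - move=> n m nm; apply/subsetPset => y /=; rewrite !in_itv /= => /le_trans; apply.
    by rewrite ler_nat.
  - apply: nearW => n /=; rewrite cdfE lee_fin ltW//.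
    by rewrite ltNge; apply/negP => /h.
by rewrite lee_fin leNgt tU.
Qed.

Lemma cdf_small t : 0 < t -> exists x, Defs.cdf mu x < t.
Proof.
move=> t0; apply: contrapT => /forallNP h.
have := @nonincreasing_cvg_mu _ _ _ mu (fun n : nat => `]-oo, - n%:R]%classic).
have -> : \bigcap_n `]-oo, - n%:R]%classic = set0 :> set R.
  apply/seteqP; split => y //= hy.
  have := hy (Num.Def.archi_bound `|y|)%N Logic.I; rewrite /= in_itv /=.
  rewrite lerNr => hle; have := archi_boundP (normr_ge0 y).
  rewrite ltNge => /negP; apply; apply: (le_trans hle).
  by rewrite -normrN ler_norm.
rewrite measure0 => cv.
have : (t%:E <= 0%E)%E.
  apply: (cvge_to_ge (cv _ _ _ _)).
  - by rewrite -ge0_fin_numE// fin_num_measure//; exact: measurable_itv.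
  - by move=> n; exact: measurable_itv.
  - exact: measurable0.
  - move=> n m nm; apply/subsetPset => y /=; rewrite !in_itv /= => /le_trans; apply.
    by rewrite lerN2 ler_nat.
  - apply: nearW => n /=; rewrite cdfE lee_fin.
    by rewrite leNgt; apply/negP => /h.
by rewrite lee_fin leNgt t0.
Qed.

Lemma cdf_inv_le t x : 0 < t < U ->
  (Defs.cdf_inv mu t <= x) <-> (t <= Defs.cdf mu x).
Proof.
case/andP => t0 tU.
have [y0 hy0] := @cdf_big t tU.
have [x0 hx0] := @cdf_small t t0.
have ne : [set x | t <= Defs.cdf mu x] !=set0 by exists y0.
have lb : has_lbound [set x | t <= Defs.cdf mu x].
  exists x0 => y /= ty; rewrite leNgt; apply/negP => yx0.
  have := le_lt_trans (le_trans ty (cdf_nd _ _ (ltW yx0))) hx0.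
  by rewrite ltxx.
split => [hx|hx]; last exact: ge_inf.
apply: cdf_rc => n.
have : Defs.cdf_inv mu t < x + n.+1%:R^-1.
  by apply: (le_lt_trans hx); rewrite ltrDl invr_gt0.
move=> /(inf_lt ne) [y /= ty yx].
exact: (le_trans ty (cdf_nd _ _ (ltW yx))).
Qed.
End cdf_props.
Arguments cdf_inv_le {R mu U} hU {t x} _.
Arguments cdf_ge0 {R} mu x.
Arguments cdf_leU {R mu U} hU x.
Arguments cdfE {R} mu x.

Lemma bad_meas (R : realType) (e : R) (p q : (R * R)%type -> R) :
  measurable_fun setT p -> measurable_fun setT q ->
  measurable [set z | 2 * e < `|p z - q z|].
Proof.
move=> mp mq.
have mf : measurable_fun setT (fun z => `|p z - q z|).
  exact: measurableT_comp (@measurable_realfun.normr_measurable R setT) (measurable_realfun.measurable_funB mp mq).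
rewrite (_ : [set z | _] = setT `&` ((fun z => `|p z - q z|) @^-1` `](2 * e), +oo[%classic)).
  exact: mf measurableT _ (measurable_itv _).
apply/seteqP; split => [z h|z [_ h]] /=; first split => //.
  by rewrite /= in_itv /= andbT.
by move: h; rewrite /= in_itv /= andbT.
Qed.

Lemma key (R : realType) (m1 m2 : {finite_measure set R -> \bar R}) (U e t : R)
  (h1 : m1 setT = U%:E) (h2 : m2 setT = U%:E) : 0 < t < U ->
  Defs.cdf_inv m2 t + 2 * e < Defs.cdf_inv m1 t ->
  exists2 d : R, 0 < d & forall (pi : {measure set (R * R)%type -> \bar R})
    (p q : (R * R)%type -> R), measurable_fun setT p -> measurable_fun setT q ->
    (forall A, measurable A -> pi (p @^-1` A) = m1 A) ->
    (forall A, measurable A -> pi (q @^-1` A) = m2 A) ->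
    (d%:E <= pi [set z | (2 * e < `|p z - q z|)%R])%E.
Proof.
move=> tt gap.
set a := Defs.cdf_inv m2 t in gap *; set b := Defs.cdf_inv m1 t in gap *.
set g := b - a - 2 * e.
have g0 : 0 < g by rewrite /g subr_gt0 ltrBrDr addrC.
set a' := a + g / 3; set b' := b - g / 3.
have ha : t <= Defs.cdf m2 a'.
  by apply/(@cdf_inv_le _ _ _ h2 t a' tt); rewrite /a' lerDl divr_ge0// ltW.
have hb : Defs.cdf m1 b' < t.
  rewrite ltNge; apply/negP => /(@cdf_inv_le _ _ _ h1 t b' tt).
  by rewrite /b' lerBrDr gerDl leNgt divr_gt0.
exists (t - Defs.cdf m1 b'); first by rewrite subr_gt0.
move=> pi p q mp mq hp hq.
set A := q @^-1` `]-oo, a']%classic; set B := p @^-1` `]-oo, b']%classic.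
have mA : measurable A by rewrite -[A]setTI; apply: mq => //; exact: measurable_itv.
have mB : measurable B by rewrite -[B]setTI; apply: mp => //; exact: measurable_itv.
have mC : measurable (A `\` B) by exact: measurableD.
have piA : pi A = (Defs.cdf m2 a')%:E by rewrite hq ?cdfE//; exact: measurable_itv.
have piB : pi B = (Defs.cdf m1 b')%:E by rewrite hp ?cdfE//; exact: measurable_itv.
have le1 : (pi A <= pi (A `\` B) + pi B)%E.
  apply: le_trans (measureU2 _ mC mB).
  apply: le_measure; rewrite ?inE//; first exact: measurableU.
  by move=> z Az; have [Bz|nBz] := pselect (B z); [right|left].
have le2 : (pi (A `\` B) <= pi [set z | (2 * e < `|p z - q z|)%R])%E.
  apply: le_measure; rewrite ?inE//; first exact: bad_meas.
  move=> z []; rewrite /A /B /preimage /= !in_itv /= => qz /negP; rewrite -ltNge => pz.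
  apply: lt_le_trans (ler_norm _).
  have h1' : b' - a' < p z - q z by apply: ltr_leB.
  apply: lt_trans h1'; rewrite /b' /a'; move: g0; rewrite /g; lra.
apply: le_trans le2.
rewrite EFinB leeBlDr// -piB.
by apply: le_trans le1; rewrite piA lee_fin.
Qed.

Lemma nd_on_meas (R : realType) (D : set R) (f : R -> R) : measurable D ->
  is_interval D -> {in D &, {homo f : x y / x <= y}} -> measurable_fun D f.
Proof.
move=> mD iD f_nd.
apply: (measurability (@measurable_realfun.RGenCInfty.G R)) => [|/= _ [_] [r] -> <-].
  exact: measurable_realfun.RGenCInfty.measurableE.
apply: is_interval_measurable => s t [Ds fs] [Dt ft] u /andP[su ut].
have Du : D u by apply: (iD s t) => //; rewrite su ut.
split => //; move: fs; rewrite /= !in_itv /= !andbT => fs.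
by rewrite (le_trans fs)// f_nd ?inE.
Qed.

Definition Gle (R : realType) : set (set R) := [set A | exists x, A = `]-oo, x]%classic].

Lemma sigmaU (T : Type) (G : set (set T)) (A B : set T) :
  <<s G >> A -> <<s G >> B -> <<s G >> (A `|` B).
Proof.
move=> hA hB; rewrite -bigcup2E; apply: sigma_algebra_bigcup => -[|[|n]] //=.
exact: sigma_algebra0.
Qed.

Lemma GleD (R : realType) (a b : R) :
  <<s Gle R >> (`]-oo, b]%classic `\` `]-oo, a]%classic).
Proof.
rewrite setDE setIC -[X in _ `&` X]setCK -setCU; rewrite -setTD; apply: sigma_algebraCD.
apply: sigmaU; last (rewrite -setTD; apply: sigma_algebraCD); apply: sub_sigma_algebra.
  by exists a.
by exists b.
Qed.

Lemma measurable_Gle (R : realType) : (@measurable _ R) = <<s Gle R >>.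
Proof.
apply/seteqP; split.
  apply: smallest_sub; first exact: smallest_sigma_algebra.
  move=> X [[a b] _ <-] /=.
  have -> : `]a, b]%classic = `]-oo, b]%classic `\` `]-oo, a]%classic :> set R.
    apply/seteqP; split => y /=; rewrite !in_itv /=.
      by case/andP => ay yb; split => //; rewrite leNgt ay.
    by case=> yb /negP; rewrite -ltNge => ay; rewrite ay.
  exact: GleD.
apply: smallest_sub; first exact: sigma_algebra_measurable.
by move=> _ [x ->]; exact: measurable_itv.
Qed.

Lemma Gle_setI (R : realType) : setI_closed (Gle R).
Proof.
move=> _ _ [x ->] [y ->]; exists (Order.min x y).
apply/seteqP; split => z /=; rewrite !in_itv /= ?le_min.
  by case=> -> ->.
by case/andP => -> ->.
Qed.

Import numFieldTopology.Exports.
Section construction.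
Context (R : realType) (U : R).

Definition qf (m : set R -> \bar R) : R -> R := (Defs.cdf_inv m) \_ (`]0, U[%classic : set R).

Lemma qfE m t : 0 < t < U -> qf m t = Defs.cdf_inv m t.
Proof. by move=> h; rewrite /qf patchE mem_set//= in_itv /=. Qed.

Context (m : {finite_measure set R -> \bar R}) (hm : m setT = U%:E).

Lemma qf_meas : measurable_fun setT (qf m).
Proof.
apply/(measurable_restrictT _ (measurable_itv `]0, U[)).
apply: nd_on_meas; [exact: measurable_itv|exact: interval_is_interval|].
move=> s t; rewrite !inE /= !in_itv /= => hs ht st.
apply/(cdf_inv_le hm hs); apply: (le_trans st).
by apply/(cdf_inv_le hm ht).
Qed.

Let mD : measurable (`]0, U[%classic : set (measurableTypeR R)).
Proof. exact: measurable_itv. Qed.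

Definition m0 : {measure set (measurableTypeR R) -> \bar R} :=
  mrestr lebesgue_measure mD.

Lemma m0_Gle x : m0 (qf m @^-1` `]-oo, x]%classic) = m `]-oo, x]%classic.
Proof.
rewrite cdfE /m0 /mrestr /=.
have F0 := cdf_ge0 m x; have FU := cdf_leU hm x.
have [FltU|FgeU] := ltP (Defs.cdf m x) U.
  transitivity (lebesgue_measure (`]0, Defs.cdf m x]%classic : set R)).
    congr (lebesgue_measure _).
    apply/seteqP; split => t /=; rewrite !in_itv /=.
      move=> [+ tt]; rewrite qfE// => /(cdf_inv_le hm tt) ->.
      by case/andP: tt => ->.
    case/andP => t0 tF; have tU : t < U by exact: le_lt_trans FltU.
    have tt : 0 < t < U by rewrite t0 tU.
    split=> //; rewrite qfE//; exact/(cdf_inv_le hm tt).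
  rewrite lebesgue_measure_itv /=; case: ifPn => [_|]; first by rewrite sube0.
  by rewrite lte_fin -leNgt => h; congr (_%:E); apply/le_anti; rewrite h F0.
have FeU : Defs.cdf m x = U by apply/le_anti; rewrite FU.
transitivity (lebesgue_measure (`]0, U[%classic : set R)).
  congr (lebesgue_measure _).
  apply/seteqP; split => t /=; first by case.
  move=> tD; split => //; move: tD; rewrite in_itv /= => tt.
  rewrite qfE//; apply/(cdf_inv_le hm tt); rewrite FeU.
  by case/andP: tt => _ /ltW.
rewrite lebesgue_measure_itv /= FeU; case: ifPn => [_|]; first by rewrite sube0.
by rewrite lte_fin -leNgt => h; congr (_%:E); apply/le_anti; rewrite h -FeU F0.
Qed.

Lemma m0_marg A : measurable A -> m0 (qf m @^-1` A) = m A.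
Proof.
move=> mA.
pose nu1 := measure_function_pushforward__canonical__measure_function_Measure m0
  (qf_meas : measurable_fun (setT : set (measurableTypeR R)) (qf m)).
apply/esym; apply: (measure_unique (Gle R) (fun n : nat => `]-oo, n%:R]%classic)
  (measurable_Gle R) (Gle_setI R) _ _ m nu1 _ _ A mA).
- by move=> n; exists n%:R.
- apply/seteqP; split => y //= _.
  exists (Num.Def.archi_bound `|y|)%N => //=; rewrite in_itv /=.
  by rewrite ltW// (le_lt_trans (ler_norm y))// archi_boundP.
- by move=> _ [x ->]; rewrite /nu1 /= /pushforward m0_Gle.
- move=> k; rewrite -ge0_fin_numE// fin_num_measure//; exact: measurable_itv.
Qed.

End construction.

Arguments key {R m1 m2 U e t}.
Arguments qf_meas {R U m} hm.
Arguments m0_marg {R U m} hm {A}.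
Arguments m0 {R} U.
Arguments qf {R} U m.

Theorem theorem6 (R : realType) (eps U : R) (heps : 0 <= eps)
  (mu nu : {finite_measure set R -> \bar R})
  (hmu : mu `<< (@lebesgue_measure R)) (hnu : nu `<< (@lebesgue_measure R))
  (hmuU : mu setT = U%:E) (hnuU : nu setT = U%:E) :
  D_eps eps mu nu = 0%E <->
  (forall t : R, 0 < t < U -> `|cdf_inv mu t - cdf_inv nu t| <= 2 * eps).
Proof.
split.
  move=> D0 t tt; rewrite leNgt; apply/negP => hlt.
  have [d d0 hd] : exists2 d : R, 0 < d & forall pi, coupling mu nu pi ->
      (d%:E <= pi [set p : R * R | (2 * eps < `|p.1 - p.2|)%R])%E.
    have [ba|ab] := leP (cdf_inv nu t) (cdf_inv mu t).
      have gap : cdf_inv nu t + 2 * eps < cdf_inv mu t.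
        by move: hlt; rewrite ger0_norm ?subr_ge0// ltrBrDl addrC.
      have [d d0 hd] := key hmuU hnuU tt gap.
      exists d => // pi [c1 c2].
      apply: (hd pi fst snd measurable_fst measurable_snd).
        move=> A mA; rewrite -c1//; congr (pi _).
        by apply/seteqP; split => z /=; [move=> ?; split|case].
      move=> A mA; rewrite -c2//; congr (pi _).
      by apply/seteqP; split => z /=; [move=> ?; split|case].
    have gap : cdf_inv mu t + 2 * eps < cdf_inv nu t.
      by move: hlt; rewrite ltr0_norm ?subr_lt0// opprB ltrBrDl addrC.
    have [d d0 hd] := key hnuU hmuU tt gap.
    exists d => // pi [c1 c2].
    have := hd pi snd fst measurable_snd measurable_fst.
    rewrite (_ : [set z | _] = [set p : R * R | 2 * eps < `|p.1 - p.2|]).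
      apply.
        move=> A mA; rewrite -c2//; congr (pi _).
        by apply/seteqP; split => z /=; [move=> ?; split|case].
      move=> A mA; rewrite -c1//; congr (pi _).
      by apply/seteqP; split => z /=; [move=> ?; split|case].
    by apply/seteqP; split => z /=; rewrite distrC.
  have : (d%:E <= D_eps eps mu nu)%E.
    by apply: le_ereal_inf_tmp => _ [pi hpi <-]; exact: hd.
  by rewrite D0 lee_fin leNgt d0.
move=> H.
pose h := fun t : R => (qf U mu t, qf U nu t).
have mh : measurable_fun (setT : set (measurableTypeR R)) h.
  exact: measurable_fun_pair (qf_meas hmuU) (qf_meas hnuU).
pose pi := measure_function_pushforward__canonical__measure_function_Measure (m0 U) mh.
have cpl : coupling mu nu pi.
  split => A mA; rewrite /pi /= /pushforward.
    rewrite -(m0_marg hmuU mA); congr (m0 U _).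
    by apply/seteqP; split => z /=; [case|move=> ?; split].
  rewrite -(m0_marg hnuU mA); congr (m0 U _).
  by apply/seteqP; split => z /=; [case|move=> ?; split].
have pi0 : pi [set p : R * R | 2 * eps < `|p.1 - p.2|] = 0%E.
  rewrite /pi /= /pushforward /m0 /mrestr /=.
  rewrite (_ : _ `&` _ = set0) ?measure0//.
  apply/seteqP; split => t //= [+ tD]; move: tD; rewrite in_itv /= => tt.
  by rewrite /h /= !qfE// ltNge H.
apply/le_anti/andP; split.
  by rewrite -pi0; apply: ereal_inf_lbound; exists pi.
by apply: le_ereal_inf_tmp => _ [pi' _ <-]; exact: measure_ge0.
Qed.
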